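(* Let $A$ be a cyclic Leibniz algebra generated by $a$, with notation as in the context. Then $A$ has a unique maximal ideal, namely $M_1=\{b\in A: t(L_a)(b)=0\}$, where $t(x)=p(x)/p_1(x)$.
   Context: A (left) Leibniz algebra is an algebra satisfying $x(yz)=(xy)z+y(xz)$ for all $x,y,z$; all algebras are finite-dimensional over a field $F$. $A$ is a cyclic Leibniz algebra generated by $a$: $A$ is generated as an algebra by the single element $a$, and with $a^1=a$, $a^{k+1}=aa^k$, the elements $a,a^2,\dots,a^n$ form a basis of $A$. Write $aa^n=\alpha_2a^2+\cdots+\alpha_na^n$. $L_a:A\to A$ is $b\mapsto ab$, with characteristic (and minimal) polynomial $p(x)=x^n-\alpha_nx^{n-1}-\cdots-\alpha_2x=p_1(x)^{n_1}\cdots p_s(x)^{n_s}$, the $p_j$ distinct monic irreducibles over $F$, $p_1(x)=x$. An ideal is a subspace $I$ with $AI\subseteq I$ and $IA\subseteq I$; a maximal ideal is a proper ideal not properly contained in any proper ideal. *)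

(* Defs.v *)
From HB Require Import structures.
From mathcomp Require Import all_boot all_order all_algebra.
Set Implicit Arguments. Unset Strict Implicit. Unset Printing Implicit Defensive.
Import GRing.Theory.
Local Open Scope ring_scope.

Section LeibnizDefs.
Variables (F : fieldType) (V : vectType F) (mul : V -> V -> V).

Definition bilinear_mul : Prop :=
  (forall x c u v, mul x (c *: u + v) = c *: mul x u + mul x v) /\
  (forall y c u v, mul (c *: u + v) y = c *: mul u y + mul v y).

Definition left_leibniz : Prop :=
  forall x y z, mul x (mul y z) = mul (mul x y) z + mul y (mul x z).

(* lpow a k = a^(k+1), with a^1 = a and a^(k+1) = a a^k *)
Fixpoint lpow (a : V) (k : nat) : V :=
  if k is k'.+1 then mul a (lpow a k') else a.

Definition cyclic_basis (a : V) : Prop :=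
  basis_of fullv (mkseq (lpow a) (\dim {:V})).

Definition La (a : V) : 'End(V) := linfun (mul a).

Definition charLa (a : V) : {poly F} :=
  char_poly (passmx.mxof (vbasis fullv) (vbasis fullv) (La a)).

Definition poly_La (q : {poly F}) (a b : V) : V :=
  \sum_(i < size q) q`_i *: iter i (mul a) b.

Definition is_ideal (I : {vspace V}) : Prop :=
  forall x y, y \in I -> mul x y \in I /\ mul y x \in I.

Definition is_maximal_ideal (I : {vspace V}) : Prop :=
  [/\ is_ideal I, I != fullv &
      forall J : {vspace V}, is_ideal J -> (I <= J)%VS -> J != fullv -> J = I].

End LeibnizDefs.

(* Main.v *)
Require Import Defs.
From HB Require Import structures.
From mathcomp Require Import all_boot all_order all_algebra.
Import GRing.Theory.
Local Open Scope ring_scope.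
Import passmx.

Lemma CH_gen (F : fieldType) (m : nat) (A : 'M[F]_m) :
  \sum_(i < size (char_poly A)) (char_poly A)`_i *: A ^+ i = 0.
Proof.
case: m A => [|m] A; first by apply/matrixP => [[]].
have := Cayley_Hamilton A.
rewrite /horner_mx /horner_morph (@horner_coef_wide _ (size (char_poly A))) => [h|].
  apply: (etrans _ h).
  by apply: eq_bigr => i _; rewrite coef_map /= [_ * _]mul_scalar_mx.
by rewrite map_polyE; apply: leq_trans (size_Poly _) _; rewrite size_map.

Qed.

Section Aux.
Variables (F : fieldType) (V : vectType F) (mul : V -> V -> V) (a : V).
Hypothesis Hbil : bilinear_mul mul.
Hypothesis Hleib : left_leibniz mul.

Lemma mulDZr x c u v : mul x (c *: u + v) = c *: mul x u + mul x v.
Proof. exact: Hbil.1. Qed.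
Lemma mulDZl y c u v : mul (c *: u + v) y = c *: mul u y + mul v y.
Proof. exact: Hbil.2. Qed.
Lemma mul0r' x : mul x 0 = 0.
Proof.
have h := mulDZr x 1 0 0; rewrite !scale1r addr0 in h.
by apply: (@addrI _ (mul x 0)); rewrite addr0 -h.
Qed.
Lemma mul0l' y : mul 0 y = 0.
Proof.
have h := mulDZl y 1 0 0; rewrite !scale1r addr0 in h.
by apply: (@addrI _ (mul 0 y)); rewrite addr0 -h.
Qed.
Lemma mulZl' y c u : mul (c *: u) y = c *: mul u y.
Proof. by have := mulDZl y c u 0; rewrite addr0 mul0l' addr0. Qed.
Lemma mulZr' x c u : mul x (c *: u) = c *: mul x u.
Proof. by have := mulDZr x c u 0; rewrite addr0 mul0r' addr0. Qed.
Lemma mulDl' y u v : mul (u + v) y = mul u y + mul v y.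
Proof. by have := mulDZl y 1 u v; rewrite !scale1r. Qed.
Lemma mulDr' x u v : mul x (u + v) = mul x u + mul x v.
Proof. by have := mulDZr x 1 u v; rewrite !scale1r. Qed.

Lemma span_ind (P : V -> Prop) (X : seq V) :
  P 0 -> (forall c u v, P u -> P v -> P (c *: u + v)) ->
  (forall x, x \in X -> P x) -> forall v, v \in <<X>>%VS -> P v.
Proof.
move=> P0 PS PX v /(@coord_span _ _ _ (in_tuple X)) ->.
elim/big_rec: _ => // i w _ Pw; apply: PS => //; apply: PX; exact: mem_nth.
Qed.

Lemma lpow_left0 k z : mul (lpow mul a k.+1) z = 0.
Proof.
elim: k z => [|k IH] z /=.
  have h := Hleib a a z.
  by apply: (@addIr _ (mul a (mul a z))); rewrite add0r -h.
have := Hleib a (lpow mul a k.+1) z; rewrite !IH addr0 => h.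
by rewrite -h; apply: mul0r'.
Qed.

Lemma iter_lin i c u v :
  iter i (mul a) (c *: u + v) = c *: iter i (mul a) u + iter i (mul a) v.
Proof. by elim: i => //= i ->; rewrite mulDZr. Qed.

Lemma iter_a i : iter i (mul a) a = lpow mul a i.
Proof. by elim: i => //= i ->. Qed.

Lemma poly_La_lin q c u v :
  poly_La mul q a (c *: u + v) = c *: poly_La mul q a u + poly_La mul q a v.
Proof.
rewrite /poly_La scaler_sumr -big_split /=; apply: eq_bigr => i _.
by rewrite iter_lin scalerDr !scalerA mulrC.
Qed.

Lemma poly_La_widen (q : {poly F}) (b : V) m : (size q <= m)%N ->
  poly_La mul q a b = \sum_(i < m) q`_i *: iter i (mul a) b.
Proof.
move=> le; rewrite /poly_La (big_ord_widen _ (fun i => q`_i *: iter i (mul a) b) le).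
rewrite big_mkcond; apply: eq_bigr => i _; case: ifP => // /negbT.
by rewrite -leqNgt => hi; rewrite nth_default // scale0r.
Qed.

Variable n' : nat.
Hypothesis Hcyc : basis_of fullv (a :: map (lpow mul a) (iota 1 n')).

Local Notation S := (map (lpow mul a) (iota 1 n')).
Local Notation H := (<<S>>%VS).

Lemma aS_span : (<<a :: S>> = fullv)%VS.
Proof. by case/andP: Hcyc => /eqP. Qed.

Lemma a_notin : a \notin H.
Proof. by case/andP: Hcyc => _; rewrite free_cons => /andP[]. Qed.

Lemma coefa0 c : c *: a \in H -> c = 0.
Proof.
move=> h; apply/eqP; apply: contraT => cn0; move/negP: a_notin => na; exfalso; apply: na.
by rewrite -[X in X \in _](scalerK cn0 a); apply: memvZ.
Qed.

Lemma decomp v : exists c h, h \in H /\ v = c *: a + h.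
Proof.
have : v \in <<a :: S>>%VS by rewrite aS_span memvf.
rewrite span_cons => /memv_addP[u /vlineP[c ->] [h hH ->]].
by exists c, h.
Qed.

Lemma H_left0 h z : h \in H -> mul h z = 0.
Proof.
move=> hH; move: h hH z; apply: span_ind.
- by move=> z; apply: mul0l'.
- by move=> c u v Pu Pv z; rewrite mulDZl Pu Pv scaler0 addr0.
- move=> x /mapP[k]; rewrite mem_iota; case: k => // k _ -> z.
  exact: lpow_left0.
Qed.

Lemma lpow_top : lpow mul a n'.+1 \in H.
Proof.
have [c [h [hH e]]] := decomp (lpow mul a n'.+1).
have key : c *: lpow mul a n'.+1 = 0.
  have := lpow_left0 n' (lpow mul a n').
  by rewrite {1}e mulDZl (H_left0 _ _ hH) addr0.
case: (eqVneq c 0) => [c0|cn0]; first by rewrite e c0 scale0r add0r.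
move/eqP: key; rewrite scaler_eq0 (negPf cn0) /= => /eqP e0.
have : c *: a = - h by apply/eqP; rewrite -subr_eq0 opprK -e; apply/eqP; exact: e0.
move=> ca; have := coefa0 c; rewrite ca memvN => /(_ hH) c0.
by rewrite c0 eqxx in cn0.
Qed.

Lemma lpowH k : (0 < k <= n'.+1)%N -> lpow mul a k \in H.
Proof.
case/andP=> k0; rewrite leq_eqVlt => /orP[/eqP->|kn]; first exact: lpow_top.
apply: memv_span; apply: map_f; rewrite mem_iota k0 /=.
by rewrite add1n.
Qed.

Lemma mulaH y : mul a y \in H.
Proof.
have [c [h [hH ->]]] := decomp y.
rewrite mulDZr; apply: memvD; first by apply: memvZ; exact: (lpowH 1).
move: h hH; apply: span_ind.
- by rewrite mul0r' mem0v.
- by move=> c' u v Pu Pv; rewrite mulDZr memvD // memvZ.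
- move=> x /mapP[k]; rewrite mem_iota => /andP[k1 kn] ->.
  apply: (lpowH k.+1); rewrite /=; rewrite add1n ltnS in kn.
  by rewrite ltnS kn.
Qed.

Lemma mulH x y : mul x y \in H.
Proof.
have [c [h [hH ->]]] := decomp x.
by rewrite mulDZl (H_left0 _ _ hH) addr0 memvZ // mulaH.
Qed.

Lemma H_ideal : is_ideal mul H.
Proof. by move=> x y _; rewrite !mulH. Qed.

Lemma H_ne : H != fullv.
Proof.
apply/eqP => e; have := a_notin; rewrite e memvf //.
Qed.

Lemma ideal_sub (I : {vspace V}) : is_ideal mul I -> I != fullv -> (I <= H)%VS.
Proof.
move=> HI Ine; apply/subvP => y yI.
have [c [h [hH e]]] := decomp y.
case: (eqVneq c 0) => [c0|cn0]; first by rewrite e c0 scale0r add0r.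
exfalso; move/negP: Ine; apply; rewrite eqEsubv subvf /=.
have maI z : mul a z \in I.
  have := (HI z y yI).2; rewrite e mulDZl (H_left0 _ _ hH) addr0.
  by move=> /(memvZ (c^-1)); rewrite scalerK.
have HI' : (H <= I)%VS.
  apply/span_subvP => x /mapP[k]; rewrite mem_iota; case: k => // k _ ->.
  exact: maI.
have hI : h \in I by apply: (subvP HI').
have aI : a \in I.
  have : c *: a \in I by have := memvB yI hI; rewrite e addrK.
  by move=> /(memvZ (c^-1)); rewrite scalerK.
rewrite -aS_span; apply/span_subvP => x; rewrite inE => /orP[/eqP->//|xS].
by apply: (subvP HI'); apply: memv_span.
Qed.

Lemma H_max : is_maximal_ideal mul H.
Proof.
split; [exact: H_ideal | exact: H_ne |].
move=> J HJ HJ1 Jne; apply/eqP; rewrite eqEsubv HJ1 andbT.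
exact: ideal_sub.
Qed.

Lemma H_unique (I : {vspace V}) : is_maximal_ideal mul I -> I = H.
Proof.
case=> HI Ine Imax; apply: esym; apply: Imax.
- exact: H_ideal.
- exact: ideal_sub.
- exact: H_ne.
Qed.


Hypothesis Hdim : \dim {:V} = n'.+1.

Lemma LaE w : La mul a w = mul a w.
Proof.
have linA : linear (mul a) by move=> c u w'; exact: mulDZr.
pose fa : {linear V -> V} := HB.pack (mul a)
  (GRing.isSemilinear.Build F V V _ (mul a) (GRing.semilinear_linear linA)).
exact: (lfunE fa w).
Qed.

Lemma CH_La v : poly_La mul (charLa mul a) a v = 0.
Proof.
pose e := vbasis (fullv : {vspace V}).
have eb : basis_of fullv e := vbasisP fullv.
pose M := passmx.mxof e e (La mul a).
have itE i w : passmx.rVof e (iter i (mul a) w) = passmx.rVof e w *m M ^+ i.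
  elim: i => [|i IH] /=; first by rewrite expr0 mulmx1.
  rewrite -LaE (passmx.rVof_app _ eb) IH exprSr; exact: esym (mulmxA _ _ _).
apply/eqP; rewrite -(passmx.rVof_eq0 eb) /poly_La linear_sum /=.
rewrite (eq_bigr (fun i : 'I__ => passmx.rVof e v *m ((charLa mul a)`_i *: M ^+ i))); last first.
  by move=> i _; rewrite linearZ /= itE scalemxAr.
by rewrite -mulmx_sumr CH_gen mulmx0.
Qed.

Lemma size_p : size (charLa mul a) = n'.+2.
Proof. by rewrite /charLa size_char_poly Hdim. Qed.

Lemma p_lead : (charLa mul a)`_n'.+1 = 1.
Proof.
have /monicP := char_poly_monic (passmx.mxof (vbasis fullv) (vbasis fullv) (La mul a)).
by rewrite -/(charLa mul a) /lead_coef size_p.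
Qed.

Lemma p0 : (charLa mul a)`_0 = 0.
Proof.
have := CH_La a; rewrite (poly_La_widen _ _ n'.+2) ?size_p // big_ord_recl /= => h.
apply: coefa0; move/eqP: h; rewrite addr_eq0 => /eqP ->; rewrite memvN.
apply: memv_suml => i _; apply: memvZ; rewrite iter_a add0n.
by apply: (lpowH i.+1); rewrite ltnS ltn_ord.
Qed.

Lemma t_coef i : (charLa mul a %/ 'X)`_i = (charLa mul a)`_i.+1.
Proof. by rewrite -[X in _ %/ X]expr1 -Pdiv.IdomainMonic.drop_poly_divp coef_drop_poly addn1. Qed.

Lemma size_t : (size (charLa mul a %/ 'X)%R <= n'.+1)%N.
Proof. by rewrite -[X in _ %/ X]expr1 -Pdiv.IdomainMonic.drop_poly_divp size_drop_poly size_p. Qed.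

Lemma t_img c : poly_La mul (charLa mul a %/ 'X) a (mul a c) = 0.
Proof.
rewrite (poly_La_widen _ _ _ size_t).
have := CH_La c; rewrite (poly_La_widen _ _ n'.+2) ?size_p // big_ord_recl p0 scale0r add0r => h.
apply: (etrans _ h).
by apply: eq_bigr => i _; rewrite t_coef lift0 -iterSr.
Qed.

Lemma t_a : poly_La mul (charLa mul a %/ 'X) a a != 0.
Proof.
have sz : size (mkseq (lpow mul a) n'.+1) == n'.+1 by rewrite size_mkseq.
pose X0 := Tuple sz.
have fX : free X0 := (andP Hcyc).2.
rewrite (poly_La_widen _ _ _ size_t); apply/eqP => h.
have := coord_sum_free (fun i : 'I_n'.+1 => (charLa mul a %/ 'X)`_i) ord_max fX.
rewrite (eq_bigr (fun i : 'I_n'.+1 => (charLa mul a %/ 'X)`_i *: iter i (mul a) a)); last first.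
  by move=> i _; rewrite iter_a /= nth_mkseq.
by rewrite h linear0 /= t_coef p_lead => /eqP; rewrite eq_sym oner_eq0.
Qed.

Lemma forward b : b \in H -> poly_La mul (charLa mul a %/ 'X) a b = 0.
Proof.
move=> bH; have : b \in limg (La mul a).
  move: b bH; apply/subvP/span_subvP => x /mapP[k]; rewrite mem_iota.
  case: k => // k _ ->; rewrite /= -LaE; apply: memv_img; exact: memvf.
by case/memv_imgP => c _ ->; rewrite LaE; exact: t_img.
Qed.

Lemma M1_iff b : b \in H <-> poly_La mul (charLa mul a %/ 'X) a b = 0.
Proof.
split; first exact: forward.
move=> h0; have [c [h [hH e]]] := decomp b.
move: h0; rewrite e poly_La_lin (forward h hH) addr0 => /eqP.
rewrite scaler_eq0 (negPf t_a) orbF => /eqP c0.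
by rewrite c0 scale0r add0r.
Qed.
End Aux.

Theorem mainTheorem14 (F : fieldType) (V : vectType F) (mul : V -> V -> V)
    (a : V) :
  bilinear_mul mul -> left_leibniz mul ->
  (0 < \dim {:V})%N -> cyclic_basis mul a ->
  let t := charLa mul a %/ 'X in
  exists M1 : {vspace V},
    (forall b, b \in M1 <-> poly_La mul t a b = 0) /\
    is_maximal_ideal mul M1 /\
    (forall I : {vspace V}, is_maximal_ideal mul I -> I = M1).
Proof.
move=> Hbil Hleib Hn Hcyc t; rewrite /cyclic_basis in Hcyc.
case E: (\dim {:V}) Hn Hcyc => [//|n'] _ Hcyc.
exists <<map (lpow mul a) (iota 1 n')>>%VS; split; [|split].
- by move=> b; apply: M1_iff.
- exact: H_max.
- by move=> I HI; apply: H_unique.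
Qed.
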